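(* For any distribution $P_{\bar Z\bar Y}$ on $\widehat{\mathcal S}\times\widehat{\mathcal X}$, any positive integer $M$ and any $\gamma>0$, there exists an $(M,d_s,d_x,\epsilon)$ code with \[\epsilon\le\mathbb P\big[g_{\bar Z\bar Y}(X,U)\ge\log\gamma\big]+e^{-M/\gamma},\] where $U$ is uniform on $[0,1]$ and independent of $X\sim P_X$, and \[g_{\bar Z\bar Y}(x,t)=\inf\big\{D(P_{ZY}\Vert P_{\bar Z\bar Y}):\ P_{ZY}\text{ a distribution on }\widehat{\mathcal S}\times\widehat{\mathcal X}\text{ with }\pi(x,Z,Y)\le t\text{ almost surely}\big\},\] with $\pi(x,z,y)=\mathbb P[\mathsf d_s(S,z)>d_s\text{ or }\mathsf d_x(x,y)>d_x\mid X=x]$, $S\sim P_{S|X=x}$.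
   Context: Let $\mathcal S,\mathcal X,\widehat{\mathcal S},\widehat{\mathcal X}$ be finite sets, $P_{SX}$ a distribution on $\mathcal S\times\mathcal X$, and $\mathsf d_s:\mathcal S\times\widehat{\mathcal S}\to[0,\infty)$, $\mathsf d_x:\mathcal X\times\widehat{\mathcal X}\to[0,\infty)$ distortion measures; fix $d_s,d_x\ge0$. An $(M,d_s,d_x,\epsilon)$ code is a random encoder $P_{U|X}:\mathcal X\to\{1,\dots,M\}$ and a random decoder $P_{ZY|U}:\{1,\dots,M\}\to\widehat{\mathcal S}\times\widehat{\mathcal X}$ (so $S-X-U-(Z,Y)$) such that $\mathbb P[\mathsf d_s(S,Z)>d_s\text{ or }\mathsf d_x(X,Y)>d_x]\le\epsilon$. $D(\cdot\Vert\cdot)$ is relative entropy; $\log$ and $\exp$ are to a common base. *)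

(* Defs.v *)
From HB Require Import structures.
From mathcomp Require Import all_boot all_order all_algebra.
From mathcomp Require Import all_classical all_reals all_analysis.
Set Implicit Arguments. Unset Strict Implicit. Unset Printing Implicit Defensive.
Import Order.TTheory GRing.Theory Num.Theory.
Local Open Scope ring_scope.
Local Open Scope classical_set_scope.

Definition is_dist (R : realType) (T : finType) (p : T -> R) : Prop :=
  (forall t, 0 <= p t) /\ \sum_(t : T) p t = 1.

Definition is_kernel (R : realType) (A B : finType) (k : A -> B -> R) : Prop :=
  forall a, is_dist (k a).

Definition relent (R : realType) (T : finType) (P Q : T -> R) : \bar R :=
  if [forall t, (P t != 0) ==> (Q t != 0)]
  then (\sum_(t : T) (if P t == 0 then 0 else P t * ln (P t / Q t)))%:E
  else +oo%E.

Definition marg_X (R : realType) (S X : finType) (P : S * X -> R) (x : X) : R :=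
  \sum_(s : S) P (s, x).

Definition excess (R : realType) (S X Sh Xh : finType)
  (dS : S -> Sh -> R) (dX : X -> Xh -> R) (Ds Dx : R)
  (s : S) (x : X) (z : Sh) (y : Xh) : R :=
  if (Ds < dS s z) || (Dx < dX x y) then 1 else 0.

(* pi(x,z,y) = P[ d_s(S,z) > Ds or d_x(x,y) > Dx | X = x ], S ~ P_{S|X=x}
   (conditional computed as P(s,x)/P_X(x); irrelevant when P_X(x)=0). *)
Definition pi_exc (R : realType) (S X Sh Xh : finType) (P : S * X -> R)
  (dS : S -> Sh -> R) (dX : X -> Xh -> R) (Ds Dx : R)
  (x : X) (z : Sh) (y : Xh) : R :=
  \sum_(s : S) (P (s, x) / marg_X P x) * excess dS dX Ds Dx s x z y.

Definition g_fun (R : realType) (S X Sh Xh : finType) (P : S * X -> R)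
  (dS : S -> Sh -> R) (dX : X -> Xh -> R) (Ds Dx : R)
  (Pbar : Sh * Xh -> R) (x : X) (t : R) : \bar R :=
  ereal_inf [set relent Q Pbar | Q in
    [set Q : Sh * Xh -> R | is_dist Q /\
       (forall zy : Sh * Xh, 0 < Q zy -> pi_exc P dS dX Ds Dx x zy.1 zy.2 <= t)]].

(* Error probability of the code (enc = P_{U|X}, dec = P_{ZY|U}). *)
Definition code_error (R : realType) (S X Sh Xh : finType) (M : nat)
  (P : S * X -> R) (dS : S -> Sh -> R) (dX : X -> Xh -> R) (Ds Dx : R)
  (enc : X -> 'I_M -> R) (dec : 'I_M -> Sh * Xh -> R) : R :=
  \sum_(sx : S * X) P sx * \sum_(u : 'I_M) enc sx.2 u *
     \sum_(zy : Sh * Xh) dec u zy * excess dS dX Ds Dx sx.1 sx.2 zy.1 zy.2.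

Definition is_code (R : realType) (S X Sh Xh : finType) (M : nat)
  (P : S * X -> R) (dS : S -> Sh -> R) (dX : X -> Xh -> R) (Ds Dx : R)
  (eps : R) : Prop :=
  exists (enc : X -> 'I_M -> R) (dec : 'I_M -> Sh * Xh -> R),
    is_kernel enc /\ is_kernel dec /\ code_error P dS dX Ds Dx enc dec <= eps.

Definition prob_g_ge (R : realType) (S X Sh Xh : finType) (P : S * X -> R)
  (dS : S -> Sh -> R) (dX : X -> Xh -> R) (Ds Dx : R)
  (Pbar : Sh * Xh -> R) (c : R) : \bar R :=
  (\sum_(x : X) (marg_X P x)%:E *
     (@lebesgue_measure R) (`[0%R, 1%R] `&`
        [set t : R | (c%:E <= g_fun P dS dX Ds Dx Pbar x t)%E]))%E.

(* Main.v *)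
Require Import Defs.
From HB Require Import structures.
From mathcomp Require Import all_boot all_order all_algebra.
From mathcomp Require Import all_classical all_reals all_analysis.
From mathcomp Require Import lra ring.
Import Order.TTheory GRing.Theory Num.Theory.
Local Open Scope ring_scope.
Local Open Scope classical_set_scope.
Lemma ln_le_sub1 (R : realType) (y : R) : 0 < y -> ln y <= y - 1.
Proof.
move=> y0; have := @le_ln1Dx R (y - 1).
rewrite addrCA subrr addr0; apply; lra.
Qed.

Lemma gibbs (R : realType) (Z : finType) (Q Pb : Z -> R) (A : pred Z) (gamma : R) :
  is_dist Q -> is_dist Pb -> 0 < gamma ->
  (forall z, 0 < Q z -> A z) -> \sum_(z | A z) Pb z <= gamma^-1 ->
  ((ln gamma)%:E <= relent Q Pb)%E.
Proof.
move=> [Q0 Q1] [P0 P1] g0 QA Aa.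
rewrite /relent; case: ifP => H; last by rewrite leey.
rewrite lee_fin.
set a := \sum_(z | A z) Pb z.
have [z0 Qz0] : exists z, 0 < Q z.
  apply/not_existsP => Hn.
  have : \sum_z Q z = 0 by rewrite big1 // => z _; apply/eqP; rewrite eq_le Q0 andbT leNgt; apply/negP => h; apply: (Hn z).
  by rewrite Q1 => /eqP; rewrite oner_eq0.
have Pz0 : 0 < Pb z0.
  move/forallP: H => /(_ z0) /implyP; rewrite gt_eqF //= => /(_ isT) h.
  by rewrite lt_def h P0.
have a0 : 0 < a.
  apply: (lt_le_trans Pz0); rewrite /a (bigD1 z0) ?QA //= lerDl.
  by apply: sumr_ge0 => z _; apply: P0.
have lga : ln gamma <= - ln a.
  rewrite -lnV ?posrE // ler_ln ?posrE ?invr_gt0 //.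
  by rewrite -(invrK gamma) lef_pV2 ?posrE ?invr_gt0.
apply: (le_trans lga).
have term : forall z, Q z - Q z * ln a - (if Q z == 0 then 0 else Pb z / a)
    <= (if Q z == 0 then 0 else Q z * ln (Q z / Pb z)).
  move=> z; case: eqP => [->|/eqP Qn]; first by rewrite mul0r !subr0.
  have Qp : 0 < Q z by rewrite lt_def Qn Q0.
  have Pp : 0 < Pb z.
    move/forallP: H => /(_ z) /implyP /(_ Qn) h; by rewrite lt_def h P0.
  have y0 : 0 < Pb z / (Q z * a) by rewrite divr_gt0 // mulr_gt0.
  have := ln_le_sub1 _ _ y0.
  rewrite ln_div ?posrE ?mulr_gt0 // lnM ?posrE // ln_div ?posrE //.
  move=> h.
  have -> : Pb z / a = Q z * (Pb z / (Q z * a)) by field; rewrite ?gt_eqF.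
  have hh : 0 <= Q z * ((Pb z / (Q z * a) - 1) - (ln (Pb z) - (ln (Q z) + ln a))).
    by apply: mulr_ge0; [exact: ltW | rewrite subr_ge0].
  move: hh; rewrite !mulrBr !mulrDr; lra.
apply: le_trans (ler_sum _ (fun z _ => term z)).
rewrite !sumrB -!mulr_suml Q1 mul1r.
have : \sum_z (if Q z == 0 then 0 else Pb z / a) <= 1.
  apply: le_trans (_ : \sum_z (if A z then Pb z / a else 0) <= 1).
    apply: ler_sum => z _; case: eqP => Qz; case: ifP => Az; rewrite ?lexx ?divr_ge0 ?(ltW a0) //.
    by exfalso; move/negbT: Az; rewrite QA // lt_def Q0 andbT; apply/eqP.
  rewrite -big_mkcond /= -mulr_suml mulfV ?gt_eqF //.
lra.
Qed.
Lemma sum_pred_le1 (R : realType) (Z : finType) (Pb : Z -> R) (A : pred Z) :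
  is_dist Pb -> \sum_(z | A z) Pb z <= 1.
Proof.
move=> [P0 P1]; rewrite -P1 big_mkcond /=; apply: ler_sum => z _.
by case: ifP => // _; apply: P0.
Qed.

Lemma tstar (R : realType) (Z : finType) (p Pb : Z -> R) (gamma : R) (M : nat) :
  (forall z, 0 <= p z <= 1) -> is_dist Pb -> 0 < gamma -> (0 < M)%N ->
  exists t', [/\ 0 <= t' <= 1,
     (forall t, 0 <= t < t' -> \sum_(z | p z <= t) Pb z <= gamma^-1) &
     (1 - \sum_(z | p z <= t') Pb z) ^+ M <= expR (- (M%:R / gamma))].
Proof.
move=> p01 hPb g0 M0.
have [P0 P1] := hPb.
pose Pbt t := \sum_(z | p z <= t) Pb z.
pose K z := gamma^-1 < Pbt (p z).
pose t' := \big[Num.min/1]_(z | K z) p z.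
have t'le : forall z, K z -> t' <= p z.
  by move=> z Kz; rewrite /t' (bigD1 z) //= ge_min lexx.
have t'cases : t' = 1 \/ exists z, K z /\ t' = p z.
  rewrite /t'; apply: (big_ind (fun v => v = 1 \/ exists z, K z /\ v = p z)).
  - by left.
  - move=> x y Hx Hy; rewrite /Num.min; case: ifP => _; [exact: Hx|exact: Hy].
  - by move=> z Kz; right; exists z.
have t'01 : 0 <= t' <= 1.
  case: t'cases => [->|[z [_ ->]]]; first by rewrite ler01 lexx.
  exact: p01.
exists t'; split => //.
- move=> t /andP[t0 tt']; rewrite leNgt; apply/negP => Ht.
  have [z1 z1t] : exists z, p z <= t.
    apply/not_existsP => Hn.
    move: Ht; rewrite big_pred0; first by rewrite ltNge invr_ge0 ltW.
    by move=> z; apply/negP => h; apply: (Hn z).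
  case: (@arg_maxP _ _ Z z1 (fun z => p z <= t) p z1t) => zs zst zmax.
  have KS : K zs.
    rewrite /K /Pbt; suff -> : \sum_(z | p z <= p zs) Pb z = \sum_(z | p z <= t) Pb z by [].
    apply: eq_bigl => z; apply/idP/idP => h; first exact: le_trans zst.
    exact: zmax.
  have := t'le _ KS; move=> h1; have := le_lt_trans (le_trans h1 zst) tt'.
  by rewrite ltxx.
- case: t'cases => [->|[z [Kz ->]]].
    have E1 : Pbt 1 = 1.
      rewrite /Pbt -{2}P1; apply: eq_bigl => z; have /andP[_ h] := p01 z.
      by rewrite h.
    rewrite /Pbt in E1; rewrite E1 subrr expr0n gt_eqF ?expR_ge0 // ltr0n.
  have q1 : Pbt (p z) <= 1 by apply: sum_pred_le1.
  have Kz' : gamma^-1 < Pbt (p z) := Kz.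
  set q := Pbt (p z) in q1 Kz' *.
  apply: (@le_trans _ _ (expR (- q) ^+ M)).
    apply: lerXn2r; rewrite ?nnegrE ?expR_ge0 ?subr_ge0 //.
    by have := expR_ge1Dx (- q).
  rewrite -expRM_natl ler_expR.
  have : M%:R / gamma <= M%:R * q.
    by apply: ler_wpM2l; [rewrite ler0n | exact: ltW].
  lra.
Qed.
Lemma cb_bound (R : realType) (Z : finType) (M : nat) (p : Z -> R) (t' : R)
  (cb : {ffun 'I_M -> Z}) (i0 : 'I_M) :
  (forall z, 0 <= p z <= 1) -> 0 <= t' -> (forall j, p (cb i0) <= p (cb j)) ->
  p (cb i0) <= t' + \prod_i (if p (cb i) <= t' then 0 else 1).
Proof.
move=> p01 t0 hmin.
case: (pickP (fun i => p (cb i) <= t')) => [j hj | hn].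
  by rewrite (bigD1 j) //= hj mul0r addr0 (le_trans (hmin j)).
rewrite big1; last by move=> i _; rewrite hn.
have /andP[_ h] := p01 (cb i0); apply: (le_trans h); lra.
Qed.

Lemma expect (R : realType) (Z : finType) (M : nat) (Pb : Z -> R)
  (h : {ffun 'I_M -> Z} -> R) (A : pred Z) (t : R) :
  is_dist Pb -> (forall cb, h cb <= t + \prod_i (if A (cb i) then 0 else 1)) ->
  \sum_(cb : {ffun 'I_M -> Z}) (\prod_i Pb (cb i)) * h cb <= t + (1 - \sum_(z | A z) Pb z) ^+ M.
Proof.
move=> [P0 P1] hb.
apply: (@le_trans _ _ (\sum_(cb : {ffun 'I_M -> Z}) (\prod_i Pb (cb i)) *
     (t + \prod_i (if A (cb i) then 0 else 1)))).
  by apply: ler_sum => cb _; apply: ler_wpM2l => //; apply: prodr_ge0 => i _.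
under eq_bigr do rewrite mulrDr.
rewrite big_split /= -mulr_suml.
have -> : \sum_(cb : {ffun 'I_M -> Z}) \prod_i Pb (cb i) = 1.
  rewrite -(bigA_distr_bigA (fun (i : 'I_M) z => Pb z)) /= P1.
  by rewrite prodr_const expr1n.
rewrite mul1r lerD2l le_eqVlt; apply/orP; left; apply/eqP.
under eq_bigr do rewrite -big_split /=.
rewrite -(bigA_distr_bigA (fun (i : 'I_M) z => Pb z * (if A z then 0 else 1))) /=.
rewrite prodr_const card_ord; congr (_ ^+ _).
have -> : \sum_z Pb z * (if A z then 0 else 1) = \sum_(z | ~~ A z) Pb z.
  by rewrite [RHS]big_mkcond; apply: eq_bigr => z _; case: (A z); rewrite /= ?mulr0 ?mulr1.
rewrite -P1 [in RHS](bigID A) /=; lra.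
Qed.
Lemma meas_ge (R : realType) (T : set R) (t : R) : 0 <= t <= 1 ->
  (forall u, 0 <= u < t -> T u) -> (t%:E <= lebesgue_measure (`[0%R, 1%R] `&` T))%E.
Proof.
move=> /andP[t0 t1] H.
have -> : t%:E = lebesgue_measure ([set` `[0, t[%R] : set R).
  rewrite lebesgue_measure_itv /= lte_fin; case: ltP => h; rewrite ?sube0 //.
  by congr (_%:E); apply/eqP; rewrite eq_le h t0.
apply: le_outer_measure => u /=; rewrite in_itv /= => /andP[u0 ut]; split.
  by rewrite in_itv /= u0 /= (le_trans (ltW ut)).
by apply: H; rewrite u0.
Qed.

Lemma argmin_le (R : realType) (I : finType) (i0 : I) (F : I -> R) j :
  F (Order.arg_min i0 xpredT F) <= F j.
Proof. by case: (@arg_minP _ _ I i0 xpredT F isT) => i _ H; apply: H. Qed.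

Lemma sum_ind (R : realType) (I : finType) (a : I) :
  \sum_(u : I) ((u == a)%:R : R) = 1.
Proof. by rewrite (bigD1 a) //= eqxx big1 ?addr0 // => u /negbTE ->. Qed.

Lemma sum_ind_mul (R : realType) (I : finType) (a : I) (F : I -> R) :
  \sum_(u : I) ((u == a)%:R * F u) = F a.
Proof.
rewrite (bigD1 a) //= eqxx mul1r big1 ?addr0 // => u /negbTE ->.
by rewrite mul0r.
Qed.

Lemma ind_dist (R : realType) (I : finType) (a : I) : is_dist (fun u : I => ((u == a)%:R : R)).
Proof. by split; [move=> t; rewrite ler0n | exact: sum_ind]. Qed.

Lemma pi_01 (R : realType) (S X Sh Xh : finType)
  (P : S * X -> R) (dS : S -> Sh -> R) (dX : X -> Xh -> R) (Ds Dx : R)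
  (P0 : forall sx, 0 <= P sx) x z y :
  0 <= pi_exc P dS dX Ds Dx x z y <= 1.
Proof.
have m0 : 0 <= marg_X P x by apply: sumr_ge0 => s _.
have e01 : forall s, 0 <= excess dS dX Ds Dx s x z y <= 1.
  by move=> s; rewrite /excess; case: ifP => _; rewrite ?lexx ?ler01.
apply/andP; split.
  apply: sumr_ge0 => s _; apply: mulr_ge0; last by have /andP[] := e01 s.
  by apply: divr_ge0.
apply: (@le_trans _ _ (\sum_s P (s, x) / marg_X P x)).
  apply: ler_sum => s _; rewrite -[X in _ <= X]mulr1; apply: ler_wpM2l.
    exact: divr_ge0.
  by have /andP[] := e01 s.
rewrite -mulr_suml -/(marg_X P x).
have [->|mn] := eqVneq (marg_X P x) 0; first by rewrite mul0r ler01.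
by rewrite mulfV.
Qed.

Lemma code_err_det (R : realType) (S X Sh Xh : finType) (M : nat)
  (P : S * X -> R) (dS : S -> Sh -> R) (dX : X -> Xh -> R) (Ds Dx : R)
  (P0 : forall sx, 0 <= P sx) (e : X -> 'I_M) (cb : 'I_M -> Sh * Xh) :
  code_error P dS dX Ds Dx (fun x u => (u == e x)%:R) (fun u zy => (zy == cb u)%:R)
  = \sum_x marg_X P x * pi_exc P dS dX Ds Dx x (cb (e x)).1 (cb (e x)).2.
Proof.
rewrite /code_error.
have inner : forall sx : S * X,
  \sum_(u : 'I_M) (u == e sx.2)%:R * \sum_(zy : Sh * Xh) (zy == cb u)%:R * excess dS dX Ds Dx sx.1 sx.2 zy.1 zy.2
  = excess dS dX Ds Dx sx.1 sx.2 (cb (e sx.2)).1 (cb (e sx.2)).2.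
  move=> sx; rewrite (sum_ind_mul _ _ (e sx.2) (fun u => \sum_(zy : Sh * Xh) (zy == cb u)%:R * excess dS dX Ds Dx sx.1 sx.2 zy.1 zy.2)).
  exact: (sum_ind_mul _ _ (cb (e sx.2)) (fun zy => excess dS dX Ds Dx sx.1 sx.2 zy.1 zy.2)).
under eq_bigr do rewrite inner.
rewrite (eq_bigr (fun sx => (fun s x => P (s, x) * excess dS dX Ds Dx s x (cb (e x)).1 (cb (e x)).2) sx.1 sx.2)); last by move=> [s x].
rewrite -(pair_bigA _ (fun s x => P (s, x) * excess dS dX Ds Dx s x (cb (e x)).1 (cb (e x)).2)) /=.
rewrite exchange_big /=; apply: eq_bigr => x _.
rewrite /pi_exc mulr_sumr.
have [m0|mn] := eqVneq (marg_X P x) 0.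
  have Pz : forall s, P (s, x) = 0.
    by move=> s; apply: (psumr_eq0P (fun i _ => P0 (i, x)) m0).
  by apply: eq_bigr => s _; rewrite Pz !mul0r mulr0.
apply: eq_bigr => s _; field; exact: mn.
Qed.

Local Close Scope classical_set_scope.

Theorem theorem2 (R : realType) (S X Sh Xh : finType)
  (P : S * X -> R) (dS : S -> Sh -> R) (dX : X -> Xh -> R) (Ds Dx : R)
  (hP : is_dist P) (hdS : forall s z, 0 <= dS s z) (hdX : forall x y, 0 <= dX x y)
  (hDs : 0 <= Ds) (hDx : 0 <= Dx)
  (Pbar : Sh * Xh -> R) (hPbar : is_dist Pbar)
  (M : nat) (hM : (0 < M)%N) (gamma : R) (hgamma : 0 < gamma) :
  exists eps : R,
    is_code M P dS dX Ds Dx eps /\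
    (eps%:E <= prob_g_ge P dS dX Ds Dx Pbar (ln gamma)
               + (expR (- (M%:R / gamma)))%:E)%E.
Proof.
have [P0 P1] := hP.
have [Pb0 Pb1] := hPbar.
pose mX := marg_X P.
have mX0 : forall x, 0 <= mX x by move=> x; apply: sumr_ge0 => s _.
have mX1 : \sum_x mX x = 1.
  have : \sum_(sx : S * X) P sx = \sum_s \sum_x P (s, x).
    by rewrite (pair_bigA _ (fun s x => P (s, x))); apply: eq_bigr => -[s x].
  by rewrite P1 => ->; rewrite /mX /marg_X exchange_big.
pose p x (z : Sh * Xh) := pi_exc P dS dX Ds Dx x z.1 z.2.
have p01 : forall x z, 0 <= p x z <= 1 by move=> x z; apply: pi_01.
have [tf Htf] : exists tf : X -> R, forall x, [/\ 0 <= tf x <= 1,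
     (forall t, 0 <= t < tf x -> \sum_(z | p x z <= t) Pbar z <= gamma^-1) &
     (1 - \sum_(z | p x z <= tf x) Pbar z) ^+ M <= expR (- (M%:R / gamma))].
  have [tf Htf] := choice (fun x => tstar _ _ (p x) Pbar gamma M (p01 x) hPbar hgamma hM).
  by exists tf.
pose i0 : 'I_M := Ordinal hM.
pose enc (cb : {ffun 'I_M -> Sh * Xh}) x := Order.arg_min i0 xpredT (fun i => p x (cb i)).
pose f (cb : {ffun 'I_M -> Sh * Xh}) := \sum_x mX x * p x (cb (enc cb x)).
have [z0 _] : exists z : Sh * Xh, true.
  case: (pickP (fun _ : (Sh * Xh)%type => true)) => [z _|H]; first by exists z.
  by exfalso; move: Pb1; rewrite big_pred0 // => /eqP; rewrite eq_sym oner_eq0.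
pose cb0 : {ffun 'I_M -> Sh * Xh} := [ffun _ => z0].
pose cbs := Order.arg_min cb0 xpredT f.
pose w (cb : {ffun 'I_M -> Sh * Xh}) := \prod_i Pbar (cb i).
pose E := expR (- (M%:R / gamma)).
exists (f cbs); split.
  exists (fun x u => ((u == enc cbs x)%:R : R)), (fun u zy => ((zy == cbs u)%:R : R)).
  split; first by move=> x; apply: ind_dist.
  split; first by move=> u; apply: ind_dist.
  by rewrite (code_err_det _ _ _ _ _ _ _ _ _ _ _ P0 (enc cbs) (fun i => cbs i)).
have step1 : f cbs <= \sum_cb w cb * f cb.
  have w1 : \sum_cb w cb = 1.
    by rewrite -(bigA_distr_bigA (fun (i : 'I_M) z => Pbar z)) /= Pb1 prodr_const expr1n.
  rewrite -[f cbs]mul1r -w1 mulr_suml; apply: ler_sum => cb _; apply: ler_wpM2l.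
    by apply: prodr_ge0 => i _; apply: Pb0.
  exact: (argmin_le _ _ cb0 f cb).
have step2 : \sum_cb w cb * f cb = \sum_x mX x * \sum_cb w cb * p x (cb (enc cb x)).
  rewrite /f; under eq_bigr do rewrite mulr_sumr.
  rewrite exchange_big /=; apply: eq_bigr => x _; rewrite mulr_sumr.
  by apply: eq_bigr => cb _; rewrite mulrCA.
have step3 : forall x, \sum_cb w cb * p x (cb (enc cb x)) <= tf x + E.
  move=> x; have [/andP[t0 t1] _ h3] := Htf x.
  apply: le_trans (expect _ _ _ Pbar (fun cb => p x (cb (enc cb x))) (fun z => p x z <= tf x) (tf x) hPbar _) _.
    move=> cb; apply: cb_bound => //.
    by move=> j; exact: (argmin_le _ _ i0 (fun i => p x (cb i)) j).
  by rewrite lerD2l.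
have step4 : f cbs <= \sum_x mX x * tf x + E.
  rewrite (le_trans step1) // step2.
  apply: (@le_trans _ _ (\sum_x mX x * (tf x + E))).
    by apply: ler_sum => x _; apply: ler_wpM2l.
  rewrite (eq_bigr (fun x => mX x * tf x + mX x * E)); last by move=> x _; rewrite mulrDr.
  by rewrite big_split /= -mulr_suml mX1 mul1r.
have step5 : ((\sum_x mX x * tf x)%:E <= prob_g_ge P dS dX Ds Dx Pbar (ln gamma))%E.
  rewrite /prob_g_ge -sumEFin; apply: lee_sum => x _; rewrite EFinM.
  apply: lee_wpmul2l; first by rewrite lee_fin.
  apply: meas_ge; first by have [] := Htf x.
  move=> u /andP[u0 ut] /=; apply: le_ereal_inf_tmp => _ [Q [hQ hQc] <-].
  apply: (gibbs _ _ _ _ (fun z => p x z <= u) gamma hQ hPbar hgamma).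
    by move=> z Qz; apply: hQc.
  by have [_ h2 _] := Htf x; apply: h2; rewrite u0 ut.
apply: le_trans (leeD step5 (lexx E%:E)).
by rewrite -EFinD lee_fin.
Qed.
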